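(* Let $\theta\in\mathbb R$. Let $h:[0,1]\to[0,1]$ be Lipschitz with $\min(\alpha,\beta)\le h\le\max(\alpha,\beta)$ and let $\nu^N_h$ be the Bernoulli product measure on $\Omega_N$ with $\nu^N_h(\eta_x=1)=h(\frac xN)$. There exists $C>0$, independent of $f$ and $N$, such that for every density $f$ with respect to $\nu^N_h$, $$\int (L_N^\ell\sqrt f)\sqrt f\,d\nu^N_h\le-\frac14D_N^\ell(\sqrt f,\nu^N_h)+\frac{C\kappa}{N^\theta}\sum_{x\in\Lambda_N}r_N^-(\tfrac xN)\big(h(\tfrac xN)-\alpha\big)^2,$$ $$\int (L_N^r\sqrt f)\sqrt f\,d\nu^N_h\le-\frac14D_N^r(\sqrt f,\nu^N_h)+\frac{C\kappa}{N^\theta}\sum_{x\in\Lambda_N}r_N^+(\tfrac xN)\big(h(\tfrac xN)-\beta\big)^2.$$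
   Context: $p:\mathbb Z\to[0,1]$ is a symmetric transition probability with finite variance; $\alpha,\beta\in(0,1)$, $\kappa>0$. $\Lambda_N=\{1,\dots,N-1\}$, $\Omega_N=\{0,1\}^{\Lambda_N}$; $\sigma^x\eta$ flips the value at $x$; $c_x(\eta;a)=\eta_x(1-a)+(1-\eta_x)a$. $(L_N^\ell f)(\eta)=\frac{\kappa}{N^\theta}\sum_{x\in\Lambda_N,y\le0}p(x-y)c_x(\eta;\alpha)[f(\sigma^x\eta)-f(\eta)]$, $(L_N^rf)(\eta)=\frac{\kappa}{N^\theta}\sum_{x\in\Lambda_N,y\ge N}p(x-y)c_x(\eta;\beta)[f(\sigma^x\eta)-f(\eta)]$. $r_N^-(\frac xN)=\sum_{y\ge x}p(y)$, $r_N^+(\frac xN)=\sum_{y\le x-N}p(y)$. For a probability $\mu$ and density $f$: $I^a_x(\sqrt f,\mu)=\int c_x(\eta;a)(\sqrt{f(\sigma^x\eta)}-\sqrt{f(\eta)})^2d\mu$, $D_N^\ell(\sqrt f,\mu)=\frac{\kappa}{N^\theta}\sum_{x\in\Lambda_N}r_N^-(\frac xN)I^\alpha_x(\sqrt f,\mu)$, $D_N^r(\sqrt f,\mu)=\frac{\kappa}{N^\theta}\sum_{x\in\Lambda_N}r_N^+(\frac xN)I^\beta_x(\sqrt f,\mu)$. A density w.r.t. $\nu$ is $f\ge0$ with $\int f d\nu=1$. *)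

(* Defs.v *)
From Stdlib Require Import Reals ZArith.
From Coquelicot Require Import Coquelicot.
From mathcomp Require Import ssreflect ssrfun ssrbool eqtype ssrnat seq choice fintype finfun bigop.

Set Implicit Arguments.
Unset Strict Implicit.
Unset Printing Implicit Defensive.

Local Open Scope R_scope.

(* p : Z -> [0,1] is a symmetric transition probability with finite variance.
   Sums over Z are split as (k >= 0) and (k < 0, i.e. -(k+1)). *)
Definition transition_prob (p : Z -> R) : Prop :=
  (forall z, 0 <= p z <= 1) /\
  ex_series (fun k : nat => p (Z.of_nat k)) /\
  ex_series (fun k : nat => p (- Z.of_nat k.+1)%Z) /\
  Series (fun k : nat => p (Z.of_nat k)) +
  Series (fun k : nat => p (- Z.of_nat k.+1)%Z) = 1.

Definition symmetric_p (p : Z -> R) : Prop := forall z, p (- z)%Z = p z.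

Definition finite_variance (p : Z -> R) : Prop :=
  ex_series (fun k : nat => IZR (Z.of_nat k) ^ 2 * p (Z.of_nat k)) /\
  ex_series (fun k : nat => IZR (- Z.of_nat k.+1)%Z ^ 2 * p (- Z.of_nat k.+1)%Z).

(* Lambda_N = {1,...,N-1} is indexed by i : 'I_(N.-1), site(i) = i+1. *)
Definition site {N : nat} (i : 'I_N.-1) : nat := i.+1.

Definition config (N : nat) := {ffun 'I_N.-1 -> bool}.

Definition b2R (b : bool) : R := if b then 1 else 0.

Definition flip {N : nat} (x : 'I_N.-1) (eta : config N) : config N :=
  [ffun y => if y == x then ~~ eta y else eta y].

Definition cx {N : nat} (eta : config N) (x : 'I_N.-1) (a : R) : R :=
  b2R (eta x) * (1 - a) + (1 - b2R (eta x)) * a.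

Definition pt (N : nat) (x : 'I_N.-1) : R := INR (site x) / INR N.

Definition Npow (N : nat) (theta : R) : R := Rpower (INR N) theta.

Definition sum_sites (N : nat) (F : 'I_N.-1 -> R) : R :=
  \big[Rplus/0]_(x : 'I_N.-1) F x.

Definition nu_h (h : R -> R) (N : nat) (eta : config N) : R :=
  \big[Rmult/1]_(x : 'I_N.-1) (if eta x then h (pt x) else 1 - h (pt x)).

Definition integral (h : R -> R) (N : nat) (g : config N -> R) : R :=
  \big[Rplus/0]_(eta : config N) (nu_h h eta * g eta).

Definition is_density (h : R -> R) (N : nat) (f : config N -> R) : Prop :=
  (forall eta, 0 <= f eta) /\ integral h f = 1.

(* Left reservoir generator: sum over y <= 0, written y = -k, k : nat. *)
Definition L_left (p : Z -> R) (kappa theta alpha : R) (N : nat)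
    (f : config N -> R) (eta : config N) : R :=
  kappa / Npow N theta *
  sum_sites (fun x =>
    Series (fun k : nat =>
      p (Z.of_nat (site x) - (- Z.of_nat k))%Z * cx eta x alpha *
      (f (flip x eta) - f eta))).

(* Right reservoir generator: sum over y >= N, written y = N + k, k : nat. *)
Definition L_right (p : Z -> R) (kappa theta beta : R) (N : nat)
    (f : config N -> R) (eta : config N) : R :=
  kappa / Npow N theta *
  sum_sites (fun x =>
    Series (fun k : nat =>
      p (Z.of_nat (site x) - (Z.of_nat N + Z.of_nat k))%Z * cx eta x beta *
      (f (flip x eta) - f eta))).

Definition r_minus (p : Z -> R) (N : nat) (x : 'I_N.-1) : R :=
  Series (fun k : nat => p (Z.of_nat (site x) + Z.of_nat k)%Z).

Definition r_plus (p : Z -> R) (N : nat) (x : 'I_N.-1) : R :=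
  Series (fun k : nat => p (Z.of_nat (site x) - Z.of_nat N - Z.of_nat k)%Z).

Definition Ix (h : R -> R) (N : nat) (a : R) (x : 'I_N.-1) (g : config N -> R) : R :=
  integral h (fun eta => cx eta x a * (g (flip x eta) - g eta) ^ 2).

Definition D_left (p : Z -> R) (kappa theta alpha : R) (h : R -> R) (N : nat)
    (g : config N -> R) : R :=
  kappa / Npow N theta * sum_sites (fun x => r_minus p x * Ix h alpha x g).

Definition D_right (p : Z -> R) (kappa theta beta : R) (h : R -> R) (N : nat)
    (g : config N -> R) : R :=
  kappa / Npow N theta * sum_sites (fun x => r_plus p x * Ix h beta x g).

Definition lipschitz_on01 (h : R -> R) : Prop :=
  exists L : R, forall u v, 0 <= u <= 1 -> 0 <= v <= 1 ->
    Rabs (h u - h v) <= L * Rabs (u - v).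

(* Main.v *)
From HB Require Import structures.
Require Import Defs.
From Stdlib Require Import Reals ZArith Lra Psatz.
From Coquelicot Require Import Coquelicot.
From mathcomp Require Import ssreflect ssrfun ssrbool eqtype ssrnat seq choice fintype finfun bigop.
Local Open Scope R_scope.
Lemma RplusA : associative Rplus. Proof. move=> *. all: try (field; lra). Qed.
Lemma RmultA : associative Rmult. Proof. move=> *. all: try (field; lra). Qed.
HB.instance Definition _ := Monoid.isComLaw.Build R 0 Rplus RplusA Rplus_comm Rplus_0_l.
HB.instance Definition _ := Monoid.isComLaw.Build R 1 Rmult RmultA Rmult_comm Rmult_1_l.
HB.instance Definition _ := Monoid.isMulLaw.Build R 0 Rmult Rmult_0_l Rmult_0_r.
HB.instance Definition _ := Monoid.isAddLaw.Build R Rmult Rplus Rmult_plus_distr_r Rmult_plus_distr_l.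

Lemma flipK N (x : 'I_N.-1) : involutive (flip x).
Proof.
move=> e; apply/ffunP => y; rewrite !ffunE.
by case: eqP => // _; rewrite negbK.
Qed.

Lemma flip_x N (x : 'I_N.-1) e : flip x e x = ~~ e x.
Proof. by rewrite ffunE eqxx. Qed.

Lemma sum_le (I : finType) (F G : I -> R) :
  (forall i, F i <= G i) -> \big[Rplus/0]_(i : I) F i <= \big[Rplus/0]_(i : I) G i.
Proof.
move=> H; apply: (big_ind2 (fun a b => a <= b)) => //; first lra.
move=> *; lra.
Qed.

Lemma pair_le N (x : 'I_N.-1) (F G : config N -> R) :
  (forall e, F e + F (flip x e) <= G e + G (flip x e)) ->
  \big[Rplus/0]_(e : config N) F e <= \big[Rplus/0]_(e : config N) G e.
Proof.
move=> H.
have sF : \big[Rplus/0]_(e : config N) F e = \big[Rplus/0]_(e : config N) F (flip x e).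
  by rewrite (reindex_inj (can_inj (@flipK _ x))).
have sG : \big[Rplus/0]_(e : config N) G e = \big[Rplus/0]_(e : config N) G (flip x e).
  by rewrite (reindex_inj (can_inj (@flipK _ x))).
have hF : \big[Rplus/0]_(e : config N) F e + \big[Rplus/0]_(e : config N) F e =
   \big[Rplus/0]_(e : config N) (F e + F (flip x e)) by rewrite big_split /= -sF.
have hG : \big[Rplus/0]_(e : config N) G e + \big[Rplus/0]_(e : config N) G e =
   \big[Rplus/0]_(e : config N) (G e + G (flip x e)) by rewrite big_split /= -sG.
have := sum_le _ _ _ H; rewrite -hF -hG => ?; lra.
Qed.

Lemma Series_ge0 (a : nat -> R) : (forall n, 0 <= a n) -> 0 <= Series a.
Proof.
move=> H; rewrite /Series.
have : Rbar_le (Lim_seq (fun _ => 0)) (Lim_seq (sum_n a)).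
  apply Lim_seq_le_loc; exists 0%nat => n _.
  elim: n => [|n IH]; first by rewrite sum_O; apply H.
  rewrite sum_Sn; have := H n.+1; rewrite /plus /=; lra.
rewrite Lim_seq_const.
case: (Lim_seq (sum_n a)) => //= r; lra.
Qed.

Lemma nu_split h N (x : 'I_N.-1) e :
  nu_h h e = (if e x then h (pt x) else 1 - h (pt x)) *
    \big[Rmult/1]_(y : 'I_N.-1 | y != x) (if e y then h (pt y) else 1 - h (pt y)).
Proof. by rewrite /nu_h (bigD1 x). Qed.

Lemma rest_flip h N (x : 'I_N.-1) e :
  \big[Rmult/1]_(y : 'I_N.-1 | y != x) (if flip x e y then h (pt y) else 1 - h (pt y)) =
  \big[Rmult/1]_(y : 'I_N.-1 | y != x) (if e y then h (pt y) else 1 - h (pt y)).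
Proof. by apply eq_bigr => y hy; rewrite /flip ffunE (negbTE hy). Qed.
Lemma two_point (a b rho a0 d : R) :
  0 < d -> d <= rho <= 1 - d -> d <= a0 <= 1 - d ->
  rho * (1 - a0) * (b - a) * a + (1 - rho) * a0 * (a - b) * b <=
  - (1/4) * (rho * (1 - a0) * (b - a) ^ 2 + (1 - rho) * a0 * (a - b) ^ 2)
  + / (2 * d ^ 2) * (rho - a0) ^ 2 * (rho * a ^ 2 + (1 - rho) * b ^ 2).
Proof.
move=> hd hr ha.
set A := rho * (1 - a0); set B := (1 - rho) * a0.
have hS : d <= A + B by rewrite /A /B; nra.
have hSp : 0 < A + B by lra.
have e1 : rho * (1 - a0) * (b - a) * a + (1 - rho) * a0 * (a - b) * b
  = - (A + B) / 2 * (a - b) ^ 2 - (rho - a0) / 2 * (a - b) * (a + b)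
  by rewrite /A /B; field.
have e2 : - (1/4) * (rho * (1 - a0) * (b - a) ^ 2 + (1 - rho) * a0 * (a - b) ^ 2)
  = - (A + B) / 4 * (a - b) ^ 2 by rewrite /A /B; field.
rewrite e1 e2.
have st1 : - (rho - a0) / 2 * (a - b) * (a + b) <=
   (A + B) / 4 * (a - b) ^ 2 + (rho - a0) ^ 2 * (a + b) ^ 2 / (4 * (A + B)).
{ have : 0 <= (/ (A + B)) * ((A + B) * (a - b) / 2 + (rho - a0) * (a + b) / 2) ^ 2.
  { apply Rmult_le_pos; [left; apply Rinv_0_lt_compat; lra | apply pow2_ge_0]. }
  have -> : (/ (A + B)) * ((A + B) * (a - b) / 2 + (rho - a0) * (a + b) / 2) ^ 2
    = (A + B) / 4 * (a - b) ^ 2 + (rho - a0) * (a - b) * (a + b) / 2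
      + (rho - a0) ^ 2 * (a + b) ^ 2 / (4 * (A + B)) by field; lra.
  lra. }
have st2 : (a + b) ^ 2 <= 2 / d * (rho * a ^ 2 + (1 - rho) * b ^ 2).
{ have h1 : (a + b) ^ 2 <= 2 * (a ^ 2 + b ^ 2).
  { have := pow2_ge_0 (a - b); nra. }
  have h2 : d * (a ^ 2 + b ^ 2) <= rho * a ^ 2 + (1 - rho) * b ^ 2.
  { have := pow2_ge_0 a; have := pow2_ge_0 b; nra. }
  have -> : 2 / d * (rho * a ^ 2 + (1 - rho) * b ^ 2) = 2 * ((rho * a ^ 2 + (1 - rho) * b ^ 2) / d) by field; lra.
  have : a ^ 2 + b ^ 2 <= (rho * a ^ 2 + (1 - rho) * b ^ 2) / d.
  { apply (Rmult_le_reg_l d); first lra. field_simplify; lra. }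
  lra. }
have st3 : (rho - a0) ^ 2 * (a + b) ^ 2 / (4 * (A + B)) <=
   / (2 * d ^ 2) * (rho - a0) ^ 2 * (rho * a ^ 2 + (1 - rho) * b ^ 2).
{ set Q := rho * a ^ 2 + (1 - rho) * b ^ 2 in st2 *.
  set E := (rho - a0) ^ 2.
  have hE : 0 <= E by apply pow2_ge_0.
  have hs : 0 <= (a + b) ^ 2 by apply pow2_ge_0.
  have -> : E * (a + b) ^ 2 / (4 * (A + B)) = E * (a + b) ^ 2 * / (4 * (A + B)) by [].
  have i1 : / (4 * (A + B)) <= / (4 * d) by apply Rinv_le_contravar; lra.
  have i2 : E * (a + b) ^ 2 * / (4 * (A + B)) <= E * (a + b) ^ 2 * / (4 * d).
  { apply Rmult_le_compat_l; nra. }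
  have i3 : E * (a + b) ^ 2 * / (4 * d) <= E * (2 / d * Q) * / (4 * d).
  { apply Rmult_le_compat_r; [left; apply Rinv_0_lt_compat; lra|].
    apply Rmult_le_compat_l; lra. }
  have -> : / (2 * d ^ 2) * E * Q = E * (2 / d * Q) * / (4 * d) by field; lra.
  lra. }
lra.
Qed.

Lemma prod_ge0 (I : finType) (P : pred I) (F : I -> R) :
  (forall i, 0 <= F i) -> 0 <= \big[Rmult/1]_(i : I | P i) F i.
Proof.
move=> H; apply: (big_ind (fun a => 0 <= a)) => //; first lra.
move=> a b ha hb; by apply Rmult_le_pos.
Qed.

Lemma site_bound h N (x : 'I_N.-1) (g : config N -> R) a0 d :
  0 < d -> (forall y : 'I_N.-1, d <= h (pt y) <= 1 - d) -> d <= a0 <= 1 - d ->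
  \big[Rplus/0]_(e : config N) (nu_h h e * (cx e x a0 * (g (flip x e) - g e) * g e)) <=
  - (1/4) * Ix h a0 x g + / (2 * d ^ 2) * (h (pt x) - a0) ^ 2 * integral h (fun e => g e ^ 2).
Proof.
move=> hd hh ha.
have -> : - (1/4) * Ix h a0 x g + / (2 * d ^ 2) * (h (pt x) - a0) ^ 2 * integral h (fun e => g e ^ 2)
  = \big[Rplus/0]_(e : config N) (- (1/4) * (nu_h h e * (cx e x a0 * (g (flip x e) - g e) ^ 2))
        + / (2 * d ^ 2) * (h (pt x) - a0) ^ 2 * (nu_h h e * g e ^ 2)).
  by rewrite /Ix /integral big_distrr [X in _ + X]big_distrr -big_split.
apply: (pair_le _ x) => e.
rewrite !(nu_split h _ x) rest_flip /cx flip_x flipK.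
have hR : 0 <= \big[Rmult/1]_(y : 'I_N.-1 | y != x) (if e y then h (pt y) else 1 - h (pt y)).
  apply prod_ge0 => y; case: (e y); have := hh y; move=> [? ?]; lra.
set Rr := \big[Rmult/1]_(y | y != x) _ in hR *.
have hx := hh x.
set rho := h (pt x) in hx *.
set u := g e; set v := g (flip x e).
case: (e x); rewrite /b2R /=.
- have tp := two_point u v rho a0 d hd hx ha.
  have := Rmult_le_compat_l Rr _ _ hR tp.
  move=> H; refine (Rle_trans _ _ _ (Req_le _ _ _) (Rle_trans _ _ _ H (Req_le _ _ _))). all: try (field; lra).
- have tp := two_point v u rho a0 d hd hx ha.
  have := Rmult_le_compat_l Rr _ _ hR tp.
  move=> H; refine (Rle_trans _ _ _ (Req_le _ _ _) (Rle_trans _ _ _ H (Req_le _ _ _))). all: try (field; lra).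
Qed.

Lemma generic h N (f : config N -> R) a0 d k (r : 'I_N.-1 -> R)
  (ser : config N -> 'I_N.-1 -> R) :
  is_density h f -> 0 < d -> (forall y : 'I_N.-1, d <= h (pt y) <= 1 - d) ->
  d <= a0 <= 1 - d -> 0 < k -> (forall x, 0 <= r x) ->
  (forall e x, ser e x = r x * (cx e x a0 * (sqrt (f (flip x e)) - sqrt (f e)))) ->
  integral h (fun e => k * sum_sites (fun x => ser e x) * sqrt (f e)) <=
  - (1/4) * (k * sum_sites (fun x => r x * Ix h a0 x (fun e => sqrt (f e))))
  + k * (/ (2 * d ^ 2) * sum_sites (fun x => r x * (h (pt x) - a0) ^ 2)).
Proof.
move=> [f0 f1] hd hh ha hk hr hser.
set g := fun e => sqrt (f e).
have hg2 : integral h (fun e => g e ^ 2) = 1.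
  by rewrite -f1; apply eq_bigr => e _; rewrite /g pow2_sqrt.
have E : integral h (fun e => k * sum_sites (fun x => ser e x) * g e) =
  k * sum_sites (fun x => r x *
     \big[Rplus/0]_(e : config N) (nu_h h e * (cx e x a0 * (g (flip x e) - g e) * g e))).
{ rewrite /integral /sum_sites.
  transitivity (\big[Rplus/0]_(e : config N) \big[Rplus/0]_(x : 'I_N.-1)
      (k * r x * (nu_h h e * (cx e x a0 * (g (flip x e) - g e) * g e)))).
  { apply eq_bigr => e _.
    rewrite big_distrr big_distrl big_distrr; apply eq_bigr => x _.
    rewrite hser /g /=; ring. }
  rewrite exchange_big big_distrr; apply eq_bigr => x _.
  rewrite big_distrr big_distrr; apply eq_bigr => e _ /=; ring. }
rewrite E.
set K := / (2 * d ^ 2).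
have B : sum_sites (fun x => r x *
     \big[Rplus/0]_(e : config N) (nu_h h e * (cx e x a0 * (g (flip x e) - g e) * g e)))
  <= sum_sites (fun x => r x * (- (1/4) * Ix h a0 x g + K * (h (pt x) - a0) ^ 2 * 1)).
{ apply sum_le => x; apply Rmult_le_compat_l; first exact: hr.
  have := site_bound h N x g a0 d hd hh ha; rewrite hg2 /K; exact. }
have E2 : sum_sites (fun x => r x * (- (1/4) * Ix h a0 x g + K * (h (pt x) - a0) ^ 2 * 1))
  = - (1/4) * sum_sites (fun x => r x * Ix h a0 x g) + K * sum_sites (fun x => r x * (h (pt x) - a0) ^ 2).
{ rewrite /sum_sites big_distrr [X in _ + X]big_distrr -big_split.
  apply eq_bigr => x _ /=; ring. }
rewrite E2 in B.
have := Rmult_le_compat_l k _ _ (Rlt_le _ _ hk) B.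
move=> H; refine (Rle_trans _ _ _ H (Req_le _ _ _)); ring.
Qed.

Lemma pt01 N (x : 'I_N.-1) : 0 <= pt x <= 1.
Proof.
rewrite /pt /site.
have hx := ltn_ord x.
have h1 : (x.+1 < N)%coq_nat by move/ltP: hx => hx; destruct N; simpl in *; lia.
have h2 : 0 < INR N by apply lt_0_INR; lia.
have h3 : INR x.+1 <= INR N by apply le_INR; lia.
have h4 : 0 <= INR x.+1 by apply pos_INR.
split.
- apply Rmult_le_pos; first done. left; by apply Rinv_0_lt_compat.
- apply (Rmult_le_reg_r (INR N)); first done.
  rewrite /Rdiv Rmult_assoc Rinv_l; lra.
Qed.

Lemma Npow_pos N theta : 0 < Npow N theta.
Proof. rewrite /Npow /Rpower; apply exp_pos. Qed.

Theorem corollary5p4 (p : Z -> R) (alpha beta kappa theta : R) (h : R -> R) :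
  transition_prob p -> symmetric_p p -> finite_variance p ->
  0 < alpha < 1 -> 0 < beta < 1 -> 0 < kappa ->
  lipschitz_on01 h ->
  (forall u, 0 <= u <= 1 -> Rmin alpha beta <= h u <= Rmax alpha beta) ->
  exists C : R, 0 < C /\
    forall (N : nat) (f : config N -> R), is_density h f ->
      integral h (fun eta => L_left p kappa theta alpha (fun e => sqrt (f e)) eta
                             * sqrt (f eta))
        <= - (1 / 4) * D_left p kappa theta alpha h (fun e => sqrt (f e))
           + C * kappa / Npow N theta *
             sum_sites (fun x : 'I_N.-1 => r_minus p x * (h (pt x) - alpha) ^ 2)
      /\
      integral h (fun eta => L_right p kappa theta beta (fun e => sqrt (f e)) eta
                             * sqrt (f eta))
        <= - (1 / 4) * D_right p kappa theta beta h (fun e => sqrt (f e))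
           + C * kappa / Npow N theta *
             sum_sites (fun x : 'I_N.-1 => r_plus p x * (h (pt x) - beta) ^ 2).
Proof.
move=> [hp _] _ _ ha hb hk _ hh.
set d := Rmin (Rmin alpha (1 - alpha)) (Rmin beta (1 - beta)).
have hd : 0 < d by rewrite /d; unfold Rmin; repeat destruct Rle_dec; lra.
have hda : d <= alpha <= 1 - d by rewrite /d; unfold Rmin; repeat destruct Rle_dec; lra.
have hdb : d <= beta <= 1 - d by rewrite /d; unfold Rmin; repeat destruct Rle_dec; lra.
exists (/ (2 * d ^ 2)); split.
  apply Rinv_0_lt_compat; have := pow_lt d 2 hd; lra.
move=> N f hf.
have hhN : forall y : 'I_N.-1, d <= h (pt y) <= 1 - d.
{ move=> y; have := hh _ (pt01 N y).
  rewrite /d; unfold Rmin, Rmax; repeat destruct Rle_dec; lra. }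
have hNp := Npow_pos N theta.
have hk' : 0 < kappa / Npow N theta.
  by apply Rdiv_lt_0_compat.
have hpos : forall z, 0 <= p z by move=> z; case: (hp z).
split.
- eapply Rle_trans.
  + apply (generic h N f alpha d (kappa / Npow N theta) (@r_minus p N)
      (fun e x => Series (fun k : nat =>
        p (Z.of_nat (site x) - (- Z.of_nat k))%Z * cx e x alpha *
        (sqrt (f (flip x e)) - sqrt (f e))))) => //.
    * move=> x; apply Series_ge0 => n; apply hpos.
    * move=> e x; rewrite /r_minus -Series_scal_r; apply Series_ext => n.
      have -> : (Z.of_nat (site x) - - Z.of_nat n)%Z = (Z.of_nat (site x) + Z.of_nat n)%Z by lia.
      ring.
  + right; rewrite /D_left; field; lra.
- eapply Rle_trans.
  + apply (generic h N f beta d (kappa / Npow N theta) (@r_plus p N)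
      (fun e x => Series (fun k : nat =>
        p (Z.of_nat (site x) - (Z.of_nat N + Z.of_nat k))%Z * cx e x beta *
        (sqrt (f (flip x e)) - sqrt (f e))))) => //.
    * move=> x; apply Series_ge0 => n; apply hpos.
    * move=> e x; rewrite /r_plus -Series_scal_r; apply Series_ext => n.
      have -> : (Z.of_nat (site x) - (Z.of_nat N + Z.of_nat n))%Z
        = (Z.of_nat (site x) - Z.of_nat N - Z.of_nat n)%Z by lia.
      ring.
  + right; rewrite /D_right; field; lra.
Qed.
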